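(* Let $n,d,c\in\mathbb{N}$ with $d\ge 50$ and $c\in[d]$, let $\mathcal{F}\subseteq 2^{[n]}$ be a hereditary family with $\delta(\mathcal{F})\ge 2^{d-1}-c+1$, and let $P$ be an isolated pile of $\mathcal{F}$ with $\sum_{x\in P}\omega_{\mathcal{F}}(x)<2^d-c$. Let $u\ge 1$ be the number of good vertices in $P$. Then every $N\in\mathcal{N}$ satisfies $|N|\le f_u$.
   Context: A family is hereditary if it is closed under taking subsets. $d_{\mathcal{F}}(x)=|\{F\in\mathcal{F}:x\in F\}|$, $\delta(\mathcal{F})=\min_x d_{\mathcal{F}}(x)$, $N(x)=\bigcup_{x\in F\in\mathcal{F}}F$. The weight of $x$ is $\omega_{\mathcal{F}}(x)=\sum_{x\in F\in\mathcal{F}}\frac{1}{|F|}$. A vertex $x$ is good if $|N(x)|\ge d+1$ and bad if $|N(x)|=d$. A set $P\subseteq[n]$ with $|P|=d$ is a pile of $\mathcal{F}$ if $P\subseteq N(y)$ for every $y\in P$, and there exists $z\in P$ with $N(z)=P$; a pile is isolated if it is disjoint from every other pile. Given the pile $P$, let $\mathcal{G}=\{S\subseteq P: S\in\mathcal{F}\}$, $\mathcal{M}=2^{P}\setminus\mathcal{G}$, and $\mathcal{N}=\{P\setminus M: M\in\mathcal{M}\}$. For a positive integer $u$, $f_u$ is the unique integer $f$ with $2^{f}-f\le u<2^{f+1}-(f+1)$. *)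

(* Defs.v *)
From mathcomp Require Import all_boot all_order all_algebra.
Set Implicit Arguments. Unset Strict Implicit. Unset Printing Implicit Defensive.
Import GRing.Theory Num.Theory.

Section Families.
Variable n : nat.
Implicit Types (FF : {set {set 'I_n}}) (P A : {set 'I_n}) (x : 'I_n).

Definition hereditary FF :=
  forall A B : {set 'I_n}, B \in FF -> A \subset B -> A \in FF.

Definition degree FF x : nat := #|[set F in FF | x \in F]|.

Definition nbhd FF x : {set 'I_n} := \bigcup_(F in FF | x \in F) F.

Definition weight FF x : rat := \sum_(F in FF | x \in F) (#|F|%:R)^-1.

Definition good FF (d : nat) x := d.+1 <= #|nbhd FF x|.
Definition bad FF (d : nat) x := #|nbhd FF x| == d.

Definition is_pile FF (d : nat) P :=
  [/\ #|P| = d,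
      (forall y, y \in P -> P \subset nbhd FF y) &
      exists2 z, z \in P & nbhd FF z = P].

Definition isolated_pile FF d P :=
  is_pile FF d P /\
  forall Q, is_pile FF d Q -> Q != P -> [disjoint P & Q].

Definition pileG FF P : {set {set 'I_n}} := [set S in powerset P | S \in FF].
Definition pileM FF P : {set {set 'I_n}} := powerset P :\: pileG FF P.
Definition pileN FF P : {set {set 'I_n}} := [set P :\: M | M in pileM FF P].

End Families.

Definition is_f_of (u f : nat) : Prop :=
  (2 ^ f - f <= u) /\ (u < 2 ^ f.+1 - f.+1).

(* Main.v *)
Require Import Defs.
From mathcomp Require Import all_boot all_order all_algebra.
From mathcomp Require Import zify ring lra.
Import Order.TTheory GRing.Theory Num.Theory.
Set Implicit Arguments. Unset Strict Implicit. Unset Printing Implicit Defensive.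

Lemma pow_lin_aux a : 17 <= a -> 24 * a * a.+1 <= 2 ^ a.
Proof.
elim: a => // a IH; rewrite leq_eqVlt => /orP [/eqP <- //|].
rewrite ltnS => ha; have h := IH ha.
have h2 : 24 * a.+1 * a.+2 <= 2 * (24 * a * a.+1).
  have h3 : a.+2 <= 2 * a by lia.
  have := leq_mul (leqnn (24 * a.+1)) h3. nia.
rewrite expnS; lia.
Qed.

Lemma small_exp d a : 50 <= d -> 2 ^ a < 8 * d * a.+1 -> 3 * a < d.
Proof.
move=> hd h; case: (leqP 17 a) => ha; last lia.
have := pow_lin_aux ha; case: (ltnP (3 * a) d) => // hda. nia.
Qed.

Lemma expm_mono a b : a <= b -> 2 ^ a - a <= 2 ^ b - b.
Proof.
elim: b => [|b IH]; first by rewrite leqn0 => /eqP ->.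
rewrite leq_eqVlt => /orP [/eqP -> //|]; rewrite ltnS => /IH h.
have h1 : 0 < 2 ^ b by rewrite expn_gt0.
have h2 : b < 2 ^ b by apply: ltn_expl.
rewrite expnS; lia.
Qed.

Lemma count_in n (P : {set 'I_n}) y : y \in P ->
  #|[set S in powerset P | y \in S]| = 2 ^ (#|P|.-1).
Proof.
move=> yP.
have -> : [set S in powerset P | y \in S] = [set y |: X | X in powerset (P :\ y)].
  apply/setP => S; rewrite !inE; apply/idP/imsetP.
  - case/andP=> SP yS; exists (S :\ y); first by rewrite inE; apply: setSD.
    by rewrite setD1K.
  - case=> X; rewrite inE => XP ->; rewrite setU11 andbT.
    by rewrite subUset sub1set yP (subset_trans XP) // subD1set.
rewrite card_in_imset ?card_powerset.
  by rewrite (cardsD1 y P) yP.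
move=> X1 X2; rewrite !inE => h1 h2 e.
have n1 : y \notin X1 by apply/negP => /(subsetP h1); rewrite !inE eqxx.
have n2 : y \notin X2 by apply/negP => /(subsetP h2); rewrite !inE eqxx.
by rewrite -(setU1K n1) e setU1K.
Qed.

Lemma card_exchange n (A : {set 'I_n}) (Fam : {set {set 'I_n}}) (Q : {set 'I_n} -> 'I_n -> bool) :
  \sum_(x in A) #|[set S in Fam | Q S x]| = \sum_(S in Fam) #|[set x in A | Q S x]|.
Proof.
have e1 : forall x, #|[set S in Fam | Q S x]| = \sum_(S in Fam) (Q S x : nat).
  move=> x; rewrite -sum1_card (eq_bigl (fun S => (S \in Fam) && Q S x)); last by move=> S; rewrite inE.
  by rewrite big_mkcondr /=; apply: eq_bigr => S _; case: (Q S x).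
have e2 : forall S, #|[set x in A | Q S x]| = \sum_(x in A) (Q S x : nat).
  move=> S; rewrite -sum1_card (eq_bigl (fun x => (x \in A) && Q S x)); last by move=> x; rewrite inE.
  by rewrite big_mkcondr /=; apply: eq_bigr => x _; case: (Q S x).
under eq_bigr do rewrite e1.
under [RHS]eq_bigr do rewrite e2.
by rewrite exchange_big.
Qed.

Local Open Scope ring_scope.
Section W.
Variables (n : nat) (FF : {set {set 'I_n}}) (P : {set 'I_n}).

Definition Out : rat := \sum_(F in FF | ~~ (F \subset P)) (#|F :&: P|%:R / #|F|%:R).

Lemma weight_sum : \sum_(x in P) weight FF x = \sum_(F in FF) (#|F :&: P|%:R / #|F|%:R : rat).
Proof.
rewrite /weight.
under eq_bigr do rewrite big_mkcondr.
rewrite exchange_big /=; apply: eq_bigr => F _.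
rewrite -big_mkcondr.
rewrite (eq_bigl (fun x => x \in F :&: P)); last by move=> x; rewrite inE andbC.
by rewrite sumr_const mulr_natl.
Qed.

Lemma card_GM : (#|pileG FF P| + #|pileM FF P| = 2 ^ #|P|)%N.
Proof.
have := cardsID (pileG FF P) (powerset P); rewrite card_powerset.
have -> : powerset P :&: pileG FF P = pileG FF P.
  by apply/setIidPr/subsetP => S; rewrite inE => /andP [].
by [].
Qed.

Lemma weight_lower : (#|pileG FF P|%:R - 1 + Out <= \sum_(x in P) weight FF x).
Proof.
rewrite weight_sum (bigID (fun F : {set 'I_n} => F \subset P)) /= lerD2r.
rewrite (bigID (fun F : {set 'I_n} => F != set0)) /=.
have h0 : 0 <= \sum_(i | (i \in FF) && (i \subset P) && ~~ (i != set0)) (#|i :&: P|%:R / #|i|%:R : rat).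
  by apply: sumr_ge0 => F _; rewrite divr_ge0.
have e : \sum_(i | (i \in FF) && (i \subset P) && (i != set0)) (#|i :&: P|%:R / #|i|%:R : rat) = #|pileG FF P :\ set0|%:R.
  rewrite -sum1_card natr_sum.
  rewrite [RHS](eq_bigl (fun i => (i \in FF) && (i \subset P) && (i != set0))); last first.
    by move=> F; rewrite !inE; case: (F \in FF); case: (F \subset P); case: (F != set0).
  apply: eq_bigr => F /andP [/andP [_ FP] F0].
  have -> : F :&: P = F by apply/setIidPl.
  by rewrite divff // pnatr_eq0 cards_eq0.
rewrite e.
have := cardsD1 set0 (pileG FF P).
case: (set0 \in pileG FF P) => /= ->; rewrite ?natrD; lra.
Qed.
End W.

Local Close Scope ring_scope.
Section Main.
Variables (n d c : nat) (FF : {set {set 'I_n}}) (P : {set 'I_n}).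
Hypotheses (hd : 50 <= d) (hc1 : 1 <= c) (hcd : c <= d) (hH : hereditary FF)
  (hdeg : forall x, 2 ^ d.-1 - c + 1 <= degree FF x) (hP : #|P| = d)
  (hsub : forall y, y \in P -> P \subset nbhd FF y).

Local Notation Mset := (pileM FF P).
Definition mv y := #|[set S in Mset | y \in S]|.
Definition ov y := #|[set F in FF | (y \in F) && ~~ (F \subset P)]|.

Lemma in_pileM (S : {set 'I_n}) : (S \in Mset) = (S \subset P) && (S \notin FF).
Proof. by rewrite /pileM /pileG !inE; case: (S \subset P); case: (S \in FF). Qed.

Lemma Mup (S S' : {set 'I_n}) : S \in Mset -> S \subset S' -> S' \subset P -> S' \in Mset.
Proof.
rewrite !in_pileM => /andP [_ SF] SS' S'P; rewrite S'P /=.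
by apply/negP => /hH /(_ SS') ; apply/negP.
Qed.

Lemma nbhd_sub y (F : {set 'I_n}) : F \in FF -> y \in F -> F \subset nbhd FF y.
Proof. by move=> FF1 yF; rewrite /nbhd; apply: (bigcup_sup F); rewrite FF1 yF. Qed.

Lemma bad_eq y : y \in P -> ~~ good FF d y -> nbhd FF y = P.
Proof.
move=> yP; rewrite /good -ltnNge ltnS => h.
by apply/esym/eqP; rewrite eqEcard hsub // hP.
Qed.

Lemma ov_bad y : y \in P -> ~~ good FF d y -> ov y = 0.
Proof.
move=> yP gy; apply/eqP; rewrite cards_eq0; apply/eqP/setP => F; rewrite !inE.
apply/negP => /andP [FF1 /andP [yF]]; rewrite -(bad_eq yP gy).
by rewrite nbhd_sub.
Qed.

Lemma deg_split y : y \in P -> mv y <= c - 1 + ov y.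
Proof.
move=> yP.
have h1 := cardsID [set F : {set 'I_n} | F \subset P] [set F in FF | y \in F].
have h2 := cardsID FF [set S in powerset P | y \in S].
have e1 : [set F in FF | y \in F] :&: [set F : {set 'I_n} | F \subset P] =
          [set S in powerset P | y \in S] :&: FF.
  by apply/setP => F; rewrite !inE; case: (F \in FF); case: (y \in F); case: (F \subset P).
have e2 : [set F in FF | y \in F] :\: [set F : {set 'I_n} | F \subset P] = [set F in FF | (y \in F) && ~~ (F \subset P)].
  by apply/setP => F; rewrite !inE; case: (F \in FF); case: (y \in F); case: (F \subset P).
have e3 : [set S in powerset P | y \in S] :\: FF = [set S in Mset | y \in S].
  by apply/setP => F; rewrite !inE; case: (F \in FF); case: (y \in F); case: (F \subset P).
rewrite e1 e2 in h1; rewrite e3 count_in // hP in h2.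
have := hdeg y; rewrite /degree /mv /ov; move=> H; rewrite -h1 in H; move: H h2; set a := #|_ :&: FF|; set b := #|[set S in Mset | _]|; set o := #|[set F in FF | _ & _]|. move=> H h2. lia.
Qed.

Lemma setDDK (T : {set 'I_n}) : T \subset P -> P :\: (P :\: T) = T.
Proof. by move=> TP; rewrite setDDr setDv set0U; apply/setIidPr. Qed.

Lemma ex_avoid b : b \in P -> ~~ good FF d b -> c <= #|Mset| -> P :\ b \in Mset.
Proof.
move=> bP gb hm.
have hmv := deg_split bP; rewrite ov_bad // addn0 in hmv.
case: (boolP [exists S in Mset, b \notin S]) => [/exists_inP [S SM bS] | ].
  apply: (Mup SM); last by apply: subD1set.
  apply/subsetP => x xS; rewrite !inE; apply/andP; split.
    by apply/eqP => e; move: bS; rewrite -e xS.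
  by move: SM; rewrite in_pileM => /andP [/subsetP SP _]; apply: SP.
rewrite negb_exists_in => /forall_inP h.
have e : [set S in Mset | b \in S] = Mset.
  by apply/setP => S; rewrite inE; case SM: (S \in Mset) => //=; have := h S SM; rewrite negbK.
move: hmv; rewrite /mv e; lia.
Qed.

Definition Bad := [set x in P | ~~ good FF d x].

Lemma case1 M0 b : M0 \in Mset -> b \in Bad -> b \notin P :\: M0 -> c <= #|Mset| ->
  (2 ^ #|P :\: M0| + #|Bad :\: (P :\: M0)| <= c)%N.
Proof.
set N := P :\: M0 => M0M; rewrite inE => /andP [bP gb] bN hm.
have hmv := deg_split bP; rewrite ov_bad // addn0 in hmv.
have NP : N \subset P by apply: subsetDl.
set Y1 := [set P :\: T | T in powerset N].
set Y2 := [set P :\ b' | b' in (Bad :\: N) :\ b].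
have c1 : #|Y1| = 2 ^ #|N|.
  rewrite card_in_imset ?card_powerset // => T1 T2; rewrite !inE => h1 h2 e.
  by rewrite -(setDDK (subset_trans h1 NP)) e setDDK // (subset_trans h2 NP).
have c2 : #|Y2| = #|Bad :\: N| - 1.
  rewrite card_in_imset.
    case: (boolP (b \in Bad :\: N)) => hb.
      by rewrite (cardsD1 b (Bad :\: N)) hb add1n subn1.
    by move: hb; rewrite in_setD bN /Bad inE bP gb.
  move=> b1 b2; rewrite !inE => /and3P [_ _ /andP [b1P _]] /and3P [_ _ /andP [b2P _]] e.
  apply/eqP; apply/negPn/negP => ne.
  have : b1 \in P :\ b2 by rewrite !inE ne b1P.
  by rewrite -e !inE eqxx.
have dis : Y1 :&: Y2 = set0.
  apply/setP => S; rewrite !inE; apply/negP => /andP [/imsetP [T TN ->] /imsetP [b' hb' e]].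
  rewrite powersetE in TN.
  move: hb'; rewrite in_setD1 in_setD => /and3P [_ b'N b'B].
  move: b'B; rewrite inE => /andP [b'P _].
  have : b' \in P :\: T.
    rewrite in_setD b'P andbT; apply/negP => /(subsetP TN) b'N'.
    by move: b'N; rewrite b'N'.
  by rewrite e !inE eqxx.
have sub : Y1 :|: Y2 \subset [set S in Mset | b \in S].
  apply/subsetP => S; rewrite in_setU => /orP [/imsetP [T TN ->] | /imsetP [b' hb' ->]].
    rewrite powersetE in TN.
    rewrite inE [b \in P :\: T]in_setD bP andbT; apply/andP; split; last first.
      by apply/negP => /(subsetP TN) bN'; move: bN; rewrite bN'.
    apply: (Mup M0M); last by apply: subsetDl.
    apply/subsetP => x xM0; rewrite in_setD; apply/andP; split.
      apply/negP => /(subsetP TN); rewrite in_setD xM0 //.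
    by move: M0M; rewrite in_pileM => /andP [/subsetP SP _]; apply: SP.
  move: hb'; rewrite in_setD1 in_setD => /and3P [bb' _ b'B].
  move: b'B; rewrite inE => /andP [b'P gb'].
  rewrite inE in_setD1 eq_sym bb' bP andbT.
  by rewrite andbT; apply: ex_avoid.
have hb1 : 0 < #|Bad :\: N|.
  by apply/card_gt0P; exists b; rewrite in_setD bN /Bad inE bP gb.
have := subset_leq_card sub; rewrite cardsU dis cards0 subn0 c1 c2.
move: hmv; rewrite /mv; move: (2 ^ #|N|) (#|Bad :\: N|) (#|[set S in Mset | b \in S]|) hb1 => t1 t2 t3; lia.
Qed.


Definition K := (d.-1 %/ 3)%N.

Lemma toK a : (2 ^ a < 8 * d * a.+1)%N -> (a <= K)%N.
Proof. move=> h; have := small_exp hd h; rewrite /K; lia. Qed.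

Lemma cube_card S : S \in Mset -> (2 ^ #|P :\: S| <= #|Mset|)%N.
Proof.
move=> SM.
have NP : P :\: S \subset P by apply: subsetDl.
have <- : #|[set P :\: T | T in powerset (P :\: S)]| = 2 ^ #|P :\: S|.
  rewrite card_in_imset ?card_powerset // => T1 T2; rewrite !inE => h1 h2 e.
  by rewrite -(setDDK (subset_trans h1 NP)) e setDDK // (subset_trans h2 NP).
apply: subset_leq_card; apply/subsetP => X /imsetP [T]; rewrite powersetE => TN ->.
apply: (Mup SM); last by apply: subsetDl.
apply/subsetP => x xS; rewrite in_setD; apply/andP; split.
  apply/negP => /(subsetP TN); rewrite in_setD xS //.
by move: SM; rewrite in_pileM => /andP [/subsetP SP _]; apply: SP.
Qed.

Lemma z_bad z : z \in P -> nbhd FF z = P -> z \in Bad.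
Proof. by move=> zP hz; rewrite inE zP /good hz hP ltnn. Qed.

Lemma m_le z : z \in P -> nbhd FF z = P -> (#|Mset| <= 2 * (c - 1))%N.
Proof.
move=> zP hz.
have zb := z_bad zP hz; move: zb; rewrite inE => /andP [_ gz].
have hmv := deg_split zP; rewrite ov_bad // addn0 in hmv.
have h1 := cardsID [set S : {set 'I_n} | z \in S] Mset.
have e1 : Mset :&: [set S : {set 'I_n} | z \in S] = [set S in Mset | z \in S].
  by apply/setP => S; rewrite !inE.
have h2 : (#|Mset :\: [set S : {set 'I_n} | z \in S]| <= #|[set S in Mset | z \in S]|)%N.
  rewrite -(@card_in_imset _ _ (fun S => z |: S)).
    apply: subset_leq_card; apply/subsetP => X /imsetP [S SD ->].
    move: SD; rewrite in_setD => /andP [zS SM].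
    apply/setIdP; split; last by rewrite setU11.
    apply: (Mup SM); first by apply: subsetUr.
    rewrite subUset sub1set zP /=.
    by move: SM; rewrite in_pileM => /andP [].
  move=> S1 S2; rewrite !inE => /andP [h1' _] /andP [h2' _] e.
  by rewrite -(setU1K h1') e setU1K.
rewrite e1 in h1; move: hmv; rewrite /mv. move: h1 h2. set q := #|Mset :\: _|. move: q (#|[set S in Mset | z \in S]|) => q q2. move=> H1 H2 H3. rewrite -H1. lia.
Qed.

Lemma out_bound (F : {set 'I_n}) y w : F \in FF -> y \in F -> y \in P -> w \in F -> w \notin P ->
  ((2 ^ (#|F| - 2))%:R / #|F|%:R <= Out FF P)%R.
Proof.
move=> FF1 yF yP wF wP.
have wy : w != y by apply/eqP => e; move: wP; rewrite e yP.
set S0 := [set y |: (w |: X) | X in powerset ((F :\ y) :\ w)].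
have cS0 : #|S0| = 2 ^ (#|F| - 2).
  rewrite card_in_imset ?card_powerset.
    congr (_ ^ _); rewrite (cardsD1 y F) yF (cardsD1 w (F :\ y)) !inE wy wF /=; lia.
  move=> X1 X2; rewrite !powersetE => h1 h2 e.
  have n1 : forall X : {set 'I_n}, X \subset (F :\ y) :\ w -> X = (y |: (w |: X)) :\ w :\ y.
    move=> X hX; apply/setP => x; rewrite !inE.
    case: (boolP (x \in X)) => xX; last by case: (x == y); case: (x == w).
    have := subsetP hX x xX; rewrite !inE => /and3P [-> -> _]. by rewrite !orbT.
  by rewrite (n1 _ h1) e -n1.
have sub0 : S0 \subset [set F' in FF | ~~ (F' \subset P)].
  apply/subsetP => X /imsetP [Y]; rewrite powersetE => hY ->; rewrite inE; apply/andP; split.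
    apply: (hH FF1); rewrite !subUset !sub1set yF wF /=.
    by apply: (subset_trans hY); apply/subsetP => x; rewrite !inE => /and3P [_ _ ->].
  by apply/subsetPn; exists w; rewrite // !inE eqxx orbT.
have -> : Out FF P = (\sum_(F' in [set F' in FF | ~~ (F' \subset P)]) (#|F' :&: P|%:R / #|F'|%:R : rat))%R.
  by rewrite /Out; apply: eq_bigl => X; rewrite inE.
rewrite (big_setID S0) /=.
have -> : [set F' in FF | ~~ (F' \subset P)] :&: S0 = S0 by apply/setIidPr.
apply: ler_wpDr; first by apply: sumr_ge0 => X _; rewrite divr_ge0.
apply: (@le_trans _ _ ((\sum_(X in S0) (#|F|%:R^-1 : rat))%R)).
  by rewrite sumr_const cS0 mulr_natl.
apply: ler_sum => X /imsetP [Y]; rewrite powersetE => hY ->.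
set F' := y |: (w |: Y).
have h1 : (1 <= #|F' :&: P|)%N by apply/card_gt0P; exists y; rewrite !inE eqxx yP.
have h3 : (#|F'| <= #|F|)%N.
  apply: subset_leq_card; rewrite !subUset !sub1set yF wF /=.
  by apply: (subset_trans hY); apply/subsetP => x; rewrite !inE => /and3P [_ _ ->].
have h2 : (0 < #|F'|)%N by apply/card_gt0P; exists y; rewrite !inE eqxx.
rewrite ler_pdivlMr ?ltr0n // mulrC ler_pdivrMr ?ltr0n; last by lia.
by rewrite -natrM ler_nat; apply: (leq_trans h3); rewrite leq_pmull.
Qed.

Lemma cube_sub S : S \in Mset -> [set P :\: T | T in powerset (P :\: S)] \subset Mset.
Proof.
move=> SM; apply/subsetP => X /imsetP [T]; rewrite powersetE => TN ->.
apply: (Mup SM); last by apply: subsetDl.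
apply/subsetP => x xS; rewrite in_setD; apply/andP; split.
  apply/negP => /(subsetP TN); rewrite in_setD xS //.
by move: SM; rewrite in_pileM => /andP [/subsetP SP _]; apply: SP.
Qed.

Lemma cube_cardE S : #|[set P :\: T | T in powerset (P :\: S)]| = 2 ^ #|P :\: S|.
Proof.
have NP : P :\: S \subset P by apply: subsetDl.
rewrite card_in_imset ?card_powerset // => T1 T2; rewrite !inE => h1 h2 e.
by rewrite -(setDDK (subset_trans h1 NP)) e setDDK // (subset_trans h2 NP).
Qed.

Lemma outK (F : {set 'I_n}) y w : F \in FF -> y \in F -> y \in P -> w \in F -> w \notin P ->
  (Out FF P < #|Mset|%:R - c%:R + 1)%R -> c <= #|Mset| -> (#|Mset| <= 2 * d)%N ->
  (#|F| <= K)%N.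
Proof.
move=> FF1 yF yP wF wP hO hm hm2.
have wy : w != y by apply/eqP => e; move: wP; rewrite e yP.
have hF2 : (2 <= #|F|)%N.
  rewrite (cardsD1 y F) yF (cardsD1 w (F :\ y)) !inE wy wF /=; lia.
have := le_lt_trans (out_bound FF1 yF yP wF wP) hO.
have -> : ((#|Mset|%:R - c%:R + 1 : rat) = (#|Mset| - c + 1)%N%:R)%R.
  by rewrite natrD natrB.
rewrite ltr_pdivrMr ?ltr0n; last by lia.
rewrite -natrM ltr_nat => h.
apply: toK.
have e4 : 2 ^ #|F| = 4 * 2 ^ (#|F| - 2).
  by rewrite -[4]/(2 ^ 2) -expnD; congr (_ ^ _); lia.
have h5 : (#|Mset| - c + 1) * #|F| <= 2 * d * #|F|.
  by apply: leq_mul => //; lia.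
have h6 : 8 * d * #|F| <= 8 * d * #|F|.+1 by apply: leq_mul.
rewrite e4; move: h h5 h6; move: (2 ^ (#|F| - 2)) => t; nia.
Qed.

Lemma sum_ov_bound : (forall F : {set 'I_n}, F \in FF -> ~~ (F \subset P) ->
    (0 < #|F :&: P|)%N -> (#|F| <= K)%N) ->
  ((\sum_(y in P) ov y)%:R <= K%:R * Out FF P :> rat)%R.
Proof.
move=> hFK.
rewrite /ov (card_exchange P FF (fun F y => (y \in F) && ~~ (F \subset P))) natr_sum.
rewrite /Out mulr_sumr (bigID (fun F : {set 'I_n} => F \subset P)) /=.
have -> : (\sum_(i in FF | i \subset P) (#|[set x in P | (x \in i) && ~~ (i \subset P)]|%:R : rat) = 0)%R.
  apply: big1 => F /andP [_ FP]; apply/eqP; rewrite pnatr_eq0 cards_eq0; apply/eqP/setP => x.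
  by rewrite !inE FP /= !andbF.
rewrite add0r; apply: ler_sum => F /andP [FF1 FP].
have -> : [set x in P | (x \in F) && ~~ (F \subset P)] = F :&: P.
  by apply/setP => x; rewrite !inE FP andbT andbC.
case: (posnP #|F :&: P|) => h0.
  by rewrite h0 mulr_ge0 ?divr_ge0.
have hK := hFK F FF1 FP h0.
have hF0 : (0 < #|F|)%N by apply: (leq_trans h0); apply: subset_leq_card; apply: subsetIl.
rewrite mulrCA; apply: ler_peMr => //.
by rewrite ler_pdivlMr ?ltr0n // mul1r ler_nat.
Qed.

Lemma case2 M0 z : M0 \in Mset -> z \in P -> nbhd FF z = P ->
  (Out FF P < #|Mset|%:R - c%:R + 1)%R -> c <= #|Mset| ->
  d < 2 ^ #|P :\: M0| -> False.
Proof.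
move=> M0M zP hz hO hm hk.
set N := P :\: M0.
have M0P : M0 \subset P by move: M0M; rewrite in_pileM => /andP [].
have hm2 := m_le zP hz.
have hm3 : #|Mset| <= 2 * d by lia.
have hkm : 2 ^ #|N| <= #|Mset| by apply: cube_card.
have hkK : #|N| <= K.
  apply: toK; have : 8 * d <= 8 * d * #|N|.+1 by apply: leq_pmulr.
  lia.
have hSK : forall S, S \in Mset -> #|P :\: S| <= K.
  move=> S SM; apply: toK; have := cube_card SM.
  have : 8 * d <= 8 * d * #|P :\: S|.+1 by apply: leq_pmulr.
  lia.
have hFK : forall F : {set 'I_n}, F \in FF -> ~~ (F \subset P) ->
    0 < #|F :&: P| -> #|F| <= K.
  move=> F FF1 FP /card_gt0P [y]; rewrite inE => /andP [yF yP].
  case/subsetPn: FP => w wF wP.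
  by apply: (outK FF1 yF yP wF wP).
set R := [set S in Mset | ~~ (M0 \subset S)].
have hmr : 2 ^ #|N| + #|R| <= #|Mset|.
  have dis : [set P :\: T | T in powerset N] :&: R = set0.
    apply/setP => S; rewrite !inE; apply/negP => /andP [/imsetP [T]].
    rewrite powersetE => TN -> /andP [_ hM].
    move/negP: hM; apply; apply/subsetP => x xM0; rewrite in_setD; apply/andP; split.
      by apply/negP => /(subsetP TN); rewrite in_setD xM0.
    by apply: (subsetP M0P).
  have sub : [set P :\: T | T in powerset N] :|: R \subset Mset.
    rewrite subUset cube_sub //=; apply/subsetP => S; rewrite inE => /andP [] //.
  have := subset_leq_card sub; rewrite cardsU dis cards0 subn0 cube_cardE.
  by [].
have hy : forall y, y \in M0 ->
    #|Mset| <= c - 1 + ov y + #|[set S in R | y \notin S]|.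
  move=> y yM0; have yP := subsetP M0P y yM0.
  have h1 := deg_split yP.
  have h2 := cardsID [set S : {set 'I_n} | y \in S] Mset.
  have e1 : Mset :&: [set S : {set 'I_n} | y \in S] = [set S in Mset | y \in S].
    by apply/setP => S; rewrite !inE.
  have e2 : #|Mset :\: [set S : {set 'I_n} | y \in S]| <= #|[set S in R | y \notin S]|.
    apply: subset_leq_card; apply/subsetP => S; rewrite in_setD => /andP [yS SM].
    rewrite in_set in yS.
    apply/setIdP; split => //; apply/setIdP; split => //.
    by apply/negP => /subsetP /(_ y yM0) yS'; rewrite yS' in yS.
  rewrite e1 in h2; move: h1; rewrite /mv => h1.
  move: h2 h1 e2; move: (#|[set S in Mset | y \in S]|) => a.
  move=> h2; rewrite -h2; move: (#|Mset :\: _|) => b. lia.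
have hsum : #|M0| * (#|Mset| - c + 1) <=
    \sum_(y in M0) ov y + \sum_(y in M0) #|[set S in R | y \notin S]|.
  rewrite -big_split /= -sum_nat_const; apply: leq_sum => y yM0.
  have := hy y yM0. move: (ov y) (#|[set S in R | y \notin S]|) => a b. move: hm; move: (#|Mset|) => mm. lia.
have hq : \sum_(y in M0) #|[set S in R | y \notin S]| <= #|R| * K.
  rewrite (card_exchange M0 R (fun S y => y \notin S)) -sum_nat_const.
  apply: leq_sum => S; rewrite inE => /andP [SM _].
  apply: leq_trans (hSK S SM); apply: subset_leq_card; apply/subsetP => x.
  by rewrite !inE => /andP [xM0 ->]; rewrite (subsetP M0P).
have ho : \sum_(y in M0) ov y <= K * (#|Mset| - c + 1).
  have h1 : \sum_(y in M0) ov y <= \sum_(y in P) ov y.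
    rewrite [X in _ <= X](big_setID M0) /=.
    have -> : P :&: M0 = M0 by apply/setIidPr.
    by apply: leq_addr.
  apply: (leq_trans h1).
  have := sum_ov_bound hFK.
  move=> h2; rewrite -(ler_nat rat); apply: (le_trans h2).
  rewrite natrM; apply: ler_wpM2l => //.
  rewrite natrD natrB //; exact: ltW.
have hM0 : #|M0| + #|N| = d.
  by rewrite -hP -(cardsID M0 P) (setIidPr M0P).
have h3K : 3 * K <= d.-1 by rewrite /K; lia.
set s := #|Mset| - c + 1 in hsum ho.
have hrs : #|R| + 1 <= s by rewrite /s; move: hmr hk hcd hm; move: (2 ^ #|N|) => t; lia.
have ha : 2 * K + 1 <= #|M0| by lia.
have e1 : (2 * K + 1) * s <= #|M0| * s by apply: leq_mul.
have e2 : #|R| * K <= (s - 1) * K by apply: leq_mul => //; lia.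
have e3 : (2 * K + 1) * s = 2 * (K * s) + s by rewrite mulnDl mul1n mulnA.
have e4 : (s - 1) * K = K * s - K by rewrite mulnBl mul1n mulnC.
have hs1 : 1 <= s by lia.
move: e1 e2 e3 e4 hsum hq ho hs1; move: (K * s) (#|M0| * s) (#|R| * K) => X Y Z.
move: (\sum_(y in M0) ov y) (\sum_(y in M0) #|[set S in R | y \notin S]|) => so sq.
lia.
Qed.
End Main.

Theorem mainTheorem18 (n d c : nat) (FF : {set {set 'I_n}}) (P : {set 'I_n}) :
  50 <= d -> 1 <= c <= d ->
  hereditary FF ->
  (forall x : 'I_n, 2 ^ d.-1 - c + 1 <= degree FF x) ->
  isolated_pile FF d P ->
  (\sum_(x in P) weight FF x < ((2 ^ d - c)%N)%:R)%R ->
  let u := #|[set x in P | good FF d x]| in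
  1 <= u ->
  forall f : nat, is_f_of u f ->
  forall N, N \in pileN FF P -> #|N| <= f.
Proof.
move=> hd /andP [hc1 hcd] hH hdeg [[hP hsub [z zP hz]] _] hW u hu f [hf1 hf2] N.
case/imsetP => M0 M0M ->.
have hG := card_GM FF P; rewrite hP in hG.
have hl := weight_lower FF P.
have hO0 : (0 <= Out FF P)%R by apply: sumr_ge0 => F _; rewrite divr_ge0.
have hc2 : c <= 2 ^ d by apply: (leq_trans hcd); apply: ltnW; apply: ltn_expl.
have hO : (Out FF P < #|pileM FF P|%:R - c%:R + 1)%R.
  move: hW; rewrite natrB // => hW.
  have e : (#|pileG FF P|%:R = (2 ^ d)%:R - #|pileM FF P|%:R :> rat)%R.
    by rewrite -hG natrD addrK.
  rewrite e in hl; lra.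
have hm : c <= #|pileM FF P|.
  have : (c%:R < #|pileM FF P|%:R + 1 :> rat)%R by lra.
  by rewrite natr1 ltr_nat ltnS.
have hBu : #|Bad d FF P| + u = d.
  have h := cardsID [set x | good FF d x] P.
  have e1 : #|P :&: [set x | good FF d x]| = u by apply: eq_card => x; rewrite !inE.
  have e2 : #|P :\: [set x | good FF d x]| = #|Bad d FF P|.
    by apply: eq_card => x; rewrite /Bad !inE andbC.
  by rewrite addnC -e1 -e2 h.
set k := #|P :\: M0|.
have key : 2 ^ k - k <= u.
  have hBN := cardsID (P :\: M0) (Bad d FF P).
  have hBN2 : #|Bad d FF P :&: (P :\: M0)| <= k by apply: subset_leq_card; apply: subsetIr.
  case: (boolP (Bad d FF P :\: (P :\: M0) == set0)) => [/eqP he | /set0Pn [b]]; last first.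
    rewrite in_setD => /andP [bN bB].
    have := case1 hd hc1 hcd hH hdeg hP hsub M0M bB bN hm.
    rewrite -/k; move: hBN hBN2 hBu hcd; move: (2 ^ k) => t; lia.
  move/eqP: he; rewrite setD_eq0 => hsubB.
  have hBk : #|Bad d FF P| <= k by apply: subset_leq_card.
  case: (leqP (2 ^ k) d) => hk.
    move: hBk hBu hk; move: (2 ^ k) => t; lia.
  by case: (case2 hd hc1 hcd hH hdeg hP hsub M0M zP hz hO hm hk).
rewrite leqNgt; apply/negP => hfk.
have := expm_mono hfk; move: key hf2; move: (2 ^ k) (2 ^ f.+1) => t1 t2; lia.
Qed.
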